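(* Let $\mathcal{X}\subseteq\mathcal{P}(\mathbb{N})$ be closed under enumeration equivalence and let $f\colon\mathcal{X}\to\mathcal{P}(\mathbb{N})$ be uniformly $e$-invariant. For any $A,B\in\mathcal{X}$ with $f(A)\neq f(B)$, we have $f(A\oplus\varnothing)\neq f(B\oplus\varnothing)$ and $f(\varnothing\oplus A)\neq f(\varnothing\oplus B)$.
   Context: $X\oplus Y=\{2n:n\in X\}\cup\{2n+1:n\in Y\}$ (note $A\oplus\varnothing\equiv_e A\equiv_e\varnothing\oplus A$, so these sets lie in $\mathcal{X}$). Enumeration reducibility: for $A,B\subseteq\mathbb{N}$, $A\le_e B$ if $A=\Gamma(B):=\{n:\exists D\subseteq B,\ \langle n,D\rangle\in\Gamma\}$ for some c.e. set $\Gamma$ of pairs $\langle n,D\rangle$ with $D$ finite (canonical index); $(\Gamma_i)_{i\in\mathbb{N}}$ is the standard computable numbering of these enumeration operators. $A\equiv_e B$ iff $A\le_e B\le_e A$. Let $\mathcal{X}\subseteq\mathcal{P}(\mathbb{N})$ be closed under $\equiv_e$. A function $f\colon\mathcal{X}\to\mathcal{P}(\mathbb{N})$ is $e$-invariant if $A\equiv_e B$ implies $f(A)\equiv_e f(B)$. Write $A\equiv_e B$ via $\langle i,j\rangle$ if $\Gamma_i(A)=B$ and $\Gamma_j(B)=A$ (with $\langle\cdot,\cdot\rangle$ a fixed computable pairing bijection). A function $u\colon\mathbb{N}\to\mathbb{N}$ is a uniformity function for $f$ if for all $A,B\in\mathcal{X}$ and all $i,j$, whenever $A\equiv_e B$ via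 $\langle i,j\rangle$ then $f(A)\equiv_e f(B)$ via $u(\langle i,j\rangle)$. $f$ is uniformly $e$-invariant if it has some uniformity function. *)

(* Defs.v *)
From mathcomp Require Import all_boot.
Set Implicit Arguments.
Unset Strict Implicit.
Unset Printing Implicit Defensive.

Definition natset := nat -> Prop.
Definition seteq (A B : natset) : Prop := forall n, A n <-> B n.
Definition emptyset : natset := fun _ => False.
(* X (+) Y = {2n : n in X} u {2n+1 : n in Y} *)
Definition oplus (A B : natset) : natset :=
  fun n => if odd n then B n./2 else A n./2.

Definition cpair (x y : nat) : nat := (x + y) * (x + y).+1 %/ 2 + y.
(* the finite set with canonical index k: D_k = {x | bit x of k is 1} *)
Definition canon (k : nat) : natset := fun x => odd (k %/ 2 ^ x).

Inductive prf : Type :=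
| PZero
| PSucc
| PProj (i : nat)
| PComp (f : prf) (gs : list prf)
| PRec (f g : prf)
| PMu (f : prf).

(* big-step semantics on argument lists (arities unchecked; missing
   arguments read as 0) *)
Inductive eval : prf -> seq nat -> nat -> Prop :=
| ev_zero args : eval PZero args 0
| ev_succ args : eval PSucc args (head 0 args).+1
| ev_proj i args : eval (PProj i) args (nth 0 args i)
| ev_comp f gs args ys v :
    evals gs args ys -> eval f ys v -> eval (PComp f gs) args v
| ev_rec0 f g rest v : eval f rest v -> eval (PRec f g) (0 :: rest) v
| ev_recS f g x rest a v :
    eval (PRec f g) (x :: rest) a -> eval g (x :: a :: rest) v ->
    eval (PRec f g) (x.+1 :: rest) v
| ev_mu f args n :
    eval f (n :: args) 0 ->
    (forall m, m < n -> exists w, eval f (m :: args) w.+1) ->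
    eval (PMu f) args n
with evals : list prf -> seq nat -> seq nat -> Prop :=
| evs_nil args : evals nil args [::]
| evs_cons g gs args y ys :
    eval g args y -> evals gs args ys -> evals (g :: gs) args (y :: ys).

Definition ce (S : natset) : Prop :=
  exists p : prf, forall n, S n <-> exists v, eval p [:: n] v.

(* Gamma is a numbering of exactly the c.e. sets (the standard numbering of
   enumeration operators is one such numbering) *)
Definition ce_numbering (Gamma : nat -> natset) : Prop :=
  (forall i, ce (Gamma i)) /\
  (forall S, ce S -> exists i, seteq (Gamma i) S).

(* Gamma(A) = {n | exists D finite, D subset A, <n, D> in Gamma} *)
Definition enum_op (G : natset) (A : natset) : natset :=
  fun n => exists k, G (cpair n k) /\ forall x, canon k x -> A x.

Definition e_le (Gamma : nat -> natset) (A B : natset) : Prop :=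
  exists i, seteq (enum_op (Gamma i) B) A.
Definition e_equiv (Gamma : nat -> natset) (A B : natset) : Prop :=
  e_le Gamma A B /\ e_le Gamma B A.
Definition e_equiv_via (Gamma : nat -> natset) (A B : natset) (i j : nat) : Prop :=
  seteq (enum_op (Gamma i) A) B /\ seteq (enum_op (Gamma j) B) A.

Definition closed_e (Gamma : nat -> natset) (X : natset -> Prop) : Prop :=
  forall A B, X A -> e_equiv Gamma A B -> X B.

Definition e_invariant (Gamma : nat -> natset) (X : natset -> Prop)
  (f : natset -> natset) : Prop :=
  forall A B, X A -> X B -> e_equiv Gamma A B -> e_equiv Gamma (f A) (f B).

Definition uniformity_function (Gamma : nat -> natset) (X : natset -> Prop)
  (f : natset -> natset) (u : nat -> nat) : Prop :=
  forall A B, X A -> X B -> forall i j, e_equiv_via Gamma A B i j ->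
    exists i' j', cpair i' j' = u (cpair i j) /\
                  e_equiv_via Gamma (f A) (f B) i' j'.

Definition uniformly_e_invariant (Gamma : nat -> natset) (X : natset -> Prop)
  (f : natset -> natset) : Prop :=
  exists u, uniformity_function Gamma X f u.

(* Main.v *)
Require Import Defs.
From mathcomp Require Import all_boot zify.
Set Implicit Arguments.
Unset Strict Implicit.

Definition computes (P : prf) (h : seq nat -> nat) :=
  forall args v, eval P args v <-> v = h args.
Definition computes_list (gs : list prf) (hs : seq (seq nat -> nat)) :=
  forall args ys, evals gs args ys <-> ys = map (fun h => h args) hs.

Lemma c_zero : computes PZero (fun _ => 0).
Proof. split; [intro H; inversion H; auto | intros ->; constructor]. Qed.
Lemma c_succ : computes PSucc (fun a => (head 0 a).+1).
Proof. split; [intro H; inversion H; auto | intros ->; constructor]. Qed.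
Lemma c_proj i : computes (PProj i) (fun a => nth 0 a i).
Proof. split; [intro H; inversion H; auto | intros ->; constructor]. Qed.
Lemma cl_nil : computes_list nil nil.
Proof. split; [intro H; inversion H; auto | intros ->; constructor]. Qed.
Lemma cl_cons g gs h hs : computes g h -> computes_list gs hs ->
  computes_list (g :: gs) (h :: hs).
Proof.
move=> Hg Hgs args ys; split.
- intro H; inversion H; subst.
  match goal with X : eval g _ _ |- _ => apply Hg in X end;
  match goal with X : evals gs _ _ |- _ => apply Hgs in X end; subst; reflexivity.
- intros ->; constructor; [apply Hg | apply Hgs]; reflexivity.
Qed.
Lemma c_comp f gs hf hs : computes f hf -> computes_list gs hs ->
  computes (PComp f gs) (fun a => hf (map (fun h => h a) hs)).
Proof.
move=> Hf Hgs args v; split.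
- intro H; inversion H; subst.
  match goal with X : evals gs _ _ |- _ => apply Hgs in X end; subst;
  match goal with X : eval f _ _ |- _ => apply Hf in X end; subst; reflexivity.
- intros ->; econstructor; [apply Hgs; reflexivity | apply Hf; reflexivity].
Qed.
Fixpoint R (hf hg : seq nat -> nat) (x : nat) (rest : seq nat) : nat :=
  match x with 0 => hf rest | x'.+1 => hg (x' :: R hf hg x' rest :: rest) end.
Lemma rec_ok f g hf hg : computes f hf -> computes g hg ->
  forall x rest v, eval (PRec f g) (x :: rest) v <-> v = R hf hg x rest.
Proof.
move=> Hf Hg; elim=> [|x IH] rest v; split.
- intro H; inversion H; subst.
  match goal with X : eval f _ _ |- _ => apply Hf in X; exact X end.
- intros ->; constructor; apply Hf; reflexivity.
- intro H; inversion H; subst.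
  match goal with X : eval (PRec f g) _ _ |- _ => apply IH in X end; subst.
  match goal with X : eval g _ _ |- _ => apply Hg in X; exact X end.
- intros ->; econstructor; [apply IH; reflexivity | apply Hg; reflexivity].
Qed.
Lemma c_comprec f g hf hg g0 gs h0 hs : computes f hf -> computes g hg ->
  computes_list (g0 :: gs) (h0 :: hs) ->
  computes (PComp (PRec f g) (g0 :: gs))
    (fun a => R hf hg (h0 a) (map (fun h => h a) hs)).
Proof.
move=> Hf Hg Hgs args v; split.
- intro H; inversion H; subst.
  match goal with X : evals _ _ _ |- _ => apply Hgs in X end; subst.
  match goal with X : eval (PRec f g) _ _ |- _ => revert X end; rewrite [map _ _]/=; move/(rec_ok Hf Hg); exact.
- intros ->; econstructor; [apply Hgs; reflexivity |].
  simpl; apply (rec_ok Hf Hg); reflexivity.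
Qed.
Lemma computes_ext P h h' : computes P h -> (forall a, h a = h' a) -> computes P h'.
Proof. move=> H E a v; rewrite -E; apply H. Qed.

Definition P0 := PProj 0.
Definition P1 := PProj 1.
Definition ADD := PComp (PRec P0 (PComp PSucc [:: P1])) [:: P0; P1].
Lemma c_add : computes ADD (fun a => nth 0 a 0 + nth 0 a 1).
Proof.
apply: computes_ext.
  exact: (c_comprec (c_proj 0) (c_comp c_succ (cl_cons (c_proj 1) cl_nil))
             (cl_cons (c_proj 0) (cl_cons (c_proj 1) cl_nil))).
move=> a /=; elim: (nth 0 a 0) => [|x IH] //=. by rewrite IH.
Qed.
Definition PRED := PComp (PRec PZero P0) [:: P0].
Lemma c_pred : computes PRED (fun a => (nth 0 a 0).-1).
Proof.
apply: computes_ext.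
  exact: (c_comprec c_zero (c_proj 0) (cl_cons (c_proj 0) cl_nil)).
by move=> a /=; case: (nth 0 a 0).
Qed.
Definition SUB := PComp (PRec P0 (PComp PRED [:: P1])) [:: P1; P0].
Lemma c_sub : computes SUB (fun a => nth 0 a 0 - nth 0 a 1).
Proof.
apply: computes_ext.
  exact: (c_comprec (c_proj 0) (c_comp c_pred (cl_cons (c_proj 1) cl_nil))
             (cl_cons (c_proj 1) (cl_cons (c_proj 0) cl_nil))).
move=> a /=; elim: (nth 0 a 1) => [|x IH] /=; first by rewrite subn0.
by rewrite IH subnS.
Qed.
Definition DIST := PComp ADD [:: SUB; PComp SUB [:: P1; P0]].
Lemma c_dist : computes DIST (fun a => (nth 0 a 0 - nth 0 a 1) + (nth 0 a 1 - nth 0 a 0)).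
Proof.
apply: computes_ext.
  exact: (c_comp c_add (cl_cons c_sub (cl_cons (c_comp c_sub (cl_cons (c_proj 1) (cl_cons (c_proj 0) cl_nil))) cl_nil))).
by [].
Qed.
Fixpoint triF s := match s with 0 => 0 | s'.+1 => triF s' + s'.+1 end.
Definition TRI := PComp (PRec PZero (PComp ADD [:: P1; PComp PSucc [:: P0]])) [:: P0].
Lemma c_tri : computes TRI (fun a => triF (nth 0 a 0)).
Proof.
apply: computes_ext.
  exact: (c_comprec c_zero (c_comp c_add (cl_cons (c_proj 1) (cl_cons (c_comp c_succ (cl_cons (c_proj 0) cl_nil)) cl_nil)))
             (cl_cons (c_proj 0) cl_nil)).
move=> a /=; elim: (nth 0 a 0) => [|x IH] //=. by rewrite IH.
Qed.
Definition POW2 := PComp (PRec (PComp PSucc [:: PZero]) (PComp ADD [:: P1; P1])) [:: P0].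
Lemma c_pow2 : computes POW2 (fun a => 2 ^ (nth 0 a 0)).
Proof.
apply: computes_ext.
  exact: (c_comprec (c_comp c_succ (cl_cons c_zero cl_nil)) (c_comp c_add (cl_cons (c_proj 1) (cl_cons (c_proj 1) cl_nil)))
             (cl_cons (c_proj 0) cl_nil)).
move=> a /=; elim: (nth 0 a 0) => [|x IH] //=. rewrite IH expnS. lia.
Qed.
Definition DOUBLE := PComp ADD [:: P0; P0].
Lemma c_double : computes DOUBLE (fun a => (nth 0 a 0).*2).
Proof.
apply: computes_ext.
  exact: (c_comp c_add (cl_cons (c_proj 0) (cl_cons (c_proj 0) cl_nil))).
by move=> a /=; rewrite addnn.
Qed.
Lemma c_id : computes P0 (fun a => nth 0 a 0).
Proof. exact: c_proj. Qed.
Lemma c_sdouble : computes (PComp PSucc [:: DOUBLE]) (fun a => (nth 0 a 0).*2.+1).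
Proof. apply: computes_ext. exact: (c_comp c_succ (cl_cons c_double cl_nil)). by []. Qed.

Lemma triF2 s : triF s * 2 = s * s.+1.
Proof. elim: s => [|s IH] //=. rewrite mulnDl IH. nia. Qed.
Lemma cpair_tri n k : cpair n k = triF (n + k) + k.
Proof. by rewrite /cpair -triF2 mulnK. Qed.
Lemma triF_mono s1 s2 : s1 < s2 -> triF s1 + s1 < triF s2.
Proof.
elim: s2 => [|s2 IH] // H. rewrite ltnS leq_eqVlt in H.
case/orP: H => [/eqP->|H] /=; first lia.
have := IH H. lia.
Qed.
Lemma cpair_inj a b c d : cpair a b = cpair c d -> a = c /\ b = d.
Proof.
rewrite !cpair_tri => E.
case: (ltngtP (a + b) (c + d)) => H.
- have := triF_mono H. lia.
- have := triF_mono H. lia.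
- rewrite H in E. lia.
Qed.

Definition CPAIR := PComp ADD [:: PComp TRI [:: ADD]; P1].
Lemma c_cpair : computes CPAIR (fun a => cpair (nth 0 a 0) (nth 0 a 1)).
Proof.
apply: computes_ext.
  exact: (c_comp c_add (cl_cons (c_comp c_tri (cl_cons c_add cl_nil)) (cl_cons (c_proj 1) cl_nil))).
by move=> a /=; rewrite cpair_tri.
Qed.

Lemma ce_mu F (d : nat -> nat -> nat) :
  computes F (fun a => d (nth 0 a 0) (nth 0 a 1)) -> ce (fun x => exists m, d m x = 0).
Proof.
move=> HF; exists (PMu F) => x; split.
- move=> [m Hm].
  have exP : exists m, d m x == 0 by exists m; apply/eqP.
  case: (ex_minnP exP) => n /eqP Hn Hmin.
  exists n; apply: ev_mu; first by apply HF.
  move=> m' Hm'. exists (d m' x).-1. apply HF => /=.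
  rewrite prednK //. rewrite lt0n. apply/negP => /Hmin. lia.
- move=> [v Hv]; inversion Hv; subst.
  match goal with X : eval F _ 0 |- _ => apply HF in X end.
  by exists v.
Qed.

Lemma ce_ext S S' : ce S -> (forall x, S x <-> S' x) -> ce S'.
Proof. move=> [p Hp] E; exists p => n; rewrite -E; apply Hp. Qed.

Definition SS (ha c : nat -> nat) : natset := fun y => exists m, y = cpair (ha m) (2 ^ c m).

Lemma ce_SS PA PC ha c : computes PA (fun a => ha (nth 0 a 0)) ->
  computes PC (fun a => c (nth 0 a 0)) -> ce (SS ha c).
Proof.
move=> HA HC.
pose F := PComp DIST [:: P1; PComp CPAIR [:: PA; PComp POW2 [:: PC]]].
have HF : computes F (fun a => let y := nth 0 a 1 in let z := cpair (ha (nth 0 a 0)) (2 ^ c (nth 0 a 0)) in (y - z) + (z - y)).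
  apply: computes_ext.
    exact: (c_comp c_dist (cl_cons (c_proj 1) (cl_cons (c_comp c_cpair (cl_cons HA (cl_cons (c_comp c_pow2 (cl_cons HC cl_nil)) cl_nil))) cl_nil))).
  by [].
apply: ce_ext; first exact: (@ce_mu F (fun m x => let z := cpair (ha m) (2 ^ c m) in (x - z) + (z - x)) HF).
move=> x /=; rewrite /SS; split.
- move=> [m Hm]; exists m. lia.
- move=> [m Hm]; exists m. lia.
Qed.

Lemma canon_pow m x : canon (2 ^ m) x <-> x = m.
Proof.
rewrite /canon; split.
- case: (ltngtP x m) => // H.
  + rewrite -(subnK (ltnW H)) expnD mulnK ?expn_gt0 // oddX.
    have -> : (m - x == 0) = false by apply/eqP; lia. by [].
  + by rewrite divn_small // ltn_exp2l.
- by move=> ->; rewrite divnn expn_gt0.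
Qed.

Lemma enum_SS ha c A n : enum_op (SS ha c) A n <-> exists m, n = ha m /\ A (c m).
Proof.
split.
- move=> [k [[m E] Hk]]. case: (cpair_inj E) => -> Ek.
  exists m; split => //; apply: Hk; rewrite Ek; exact/canon_pow.
- move=> [m [-> Hm]]; exists (2 ^ c m); split; first by exists m.
  by move=> x /canon_pow ->.
Qed.

Lemma enum_op_ext G A B : seteq A B -> seteq (enum_op G A) (enum_op G B).
Proof. move=> E n; split; move=> [k [Hk H]]; exists k; split => // x /H; apply E. Qed.
Lemma enum_op_extG G G' A : seteq G G' -> seteq (enum_op G A) (enum_op G' A).
Proof. move=> E n; split; move=> [k [Hk H]]; exists k; split => //; by apply E. Qed.

Lemma seteq_sym A B : seteq A B -> seteq B A.
Proof. move=> E n; split; apply E. Qed.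
Lemma seteq_trans A B C : seteq A B -> seteq B C -> seteq A C.
Proof. move=> E1 E2 n; split => H; [apply E2; apply E1 | apply E1; apply E2] => //. Qed.

Lemma idx_SS Gamma (HG : ce_numbering Gamma) PA PC ha c :
  computes PA (fun a => ha (nth 0 a 0)) -> computes PC (fun a => c (nth 0 a 0)) ->
  exists i, forall A, seteq (enum_op (Gamma i) A) (enum_op (SS ha c) A).
Proof.
move=> HA HC; case: (proj2 HG _ (ce_SS HA HC)) => i Hi.
exists i => A; exact: enum_op_extG.
Qed.

Lemma key Gamma X f (HX : closed_e Gamma X) (u : nat -> nat)
  (Hu : uniformity_function Gamma X f u) (T : natset -> natset) i j
  (HT : forall C, e_equiv_via Gamma C (T C) i j)
  A B (HA : X A) (HB : X B) (Hne : ~ seteq (f A) (f B)) :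
  ~ seteq (f (T A)) (f (T B)).
Proof.
have XT : forall C, X C -> X (T C).
  move=> C HC; apply: (HX C) => //; case: (HT C) => H1 H2.
  by split; [exists j | exists i].
case: (Hu A (T A) HA (XT A HA) i j (HT A)) => iA [jA [EA [_ HA2]]].
case: (Hu B (T B) HB (XT B HB) i j (HT B)) => iB [jB [EB [_ HB2]]].
rewrite -EB in EA. case: (cpair_inj EA) => _ Ej. rewrite -Ej in HB2.
move=> E; apply: Hne.
apply: seteq_trans; first exact: (seteq_sym HA2).
apply: seteq_trans; last exact: HB2.
exact: enum_op_ext.
Qed.

Theorem lemma5p2 (Gamma : nat -> natset) (HGamma : ce_numbering Gamma)
  (X : natset -> Prop) (HX : closed_e Gamma X)
  (f : natset -> natset) (Hf : uniformly_e_invariant Gamma X f)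
  (A B : natset) (HA : X A) (HB : X B) (Hne : ~ seteq (f A) (f B)) :
  ~ seteq (f (oplus A emptyset)) (f (oplus B emptyset)) /\
  ~ seteq (f (oplus emptyset A)) (f (oplus emptyset B)).
Proof.
case: Hf => u Hu.
case: (@idx_SS Gamma HGamma _ _ double id c_double c_id) => i1 H1.
case: (@idx_SS Gamma HGamma _ _ id double c_id c_double) => i2 H2.
case: (@idx_SS Gamma HGamma _ _ (fun m => m.*2.+1) id c_sdouble c_id) => i3 H3.
case: (@idx_SS Gamma HGamma _ _ id (fun m => m.*2.+1) c_id c_sdouble) => i4 H4.
split.
- apply: (key HX Hu (T := fun C => oplus C emptyset) (i := i1) (j := i2)) => // C.
  split => n.
  + rewrite (H1 C n) enum_SS /oplus; split.
    * by move=> [m [-> Hm]]; rewrite odd_double doubleK.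
    * case: ifP => // Ho Hn; exists n./2; split => //.
      by rewrite -[n in LHS]odd_double_half Ho add0n.
  + rewrite (H2 _ n) enum_SS /oplus; split.
    * by move=> [m [-> ]]; rewrite odd_double doubleK.
    * by move=> Hn; exists n; rewrite odd_double doubleK.
- apply: (key HX Hu (T := fun C => oplus emptyset C) (i := i3) (j := i4)) => // C.
  split => n.
  + rewrite (H3 C n) enum_SS /oplus; split.
    * by move=> [m [-> Hm]]; rewrite /= odd_double /= uphalf_double.
    * case: ifP => // Ho Hn; exists n./2; split => //.
      by rewrite -[n in LHS]odd_double_half Ho add1n.
  + rewrite (H4 _ n) enum_SS /oplus; split.
    * by move=> [m [-> ]]; rewrite /= odd_double /= uphalf_double.
    * by move=> Hn; exists n; rewrite /= odd_double /= uphalf_double.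
Qed.
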